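(* The class $\mathcal{S}^*_{nc}$ satisfies: (1) $\mathcal{S}^*_{nc}\subset\mathcal{S}^*$; (2) $\mathcal{S}^*_{nc}\not\subset\mathcal{S}^*(\alpha)$ for every $\alpha\in(0,1)$; (3) $\mathcal{S}^*_{nc}\subset\mu(\beta)$ whenever $\beta\ge 2\sec 1$.
   Context: $\mathbb{D}$ is the open unit disk. $\mathcal{A}$ is the class of analytic $f$ on $\mathbb{D}$ with $f(0)=0$, $f'(0)=1$. For analytic $f,g$ on $\mathbb{D}$, $f\prec g$ means $f=g\circ\omega$ for some analytic $\omega:\mathbb{D}\to\mathbb{D}$ with $\omega(0)=0$. $\mathcal{S}^*_{nc}=\{f\in\mathcal{A}: zf'(z)/f(z)\prec (1+z)/\cos z\}$. $\mathcal{S}^*=\{f\in\mathcal{A}:\operatorname{Re}(zf'(z)/f(z))>0,\ z\in\mathbb{D}\}$; for $0\le\alpha<1$, $\mathcal{S}^*(\alpha)=\{f\in\mathcal{A}:\operatorname{Re}(zf'(z)/f(z))>\alpha,\ z\in\mathbb{D}\}$; for $\beta>1$, $\mu(\beta)=\{f\in\mathcal{A}:\operatorname{Re}(zf'(z)/f(z))<\beta,\ z\in\mathbb{D}\}$. *)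

(* Defs.v *)
From Stdlib Require Import Reals ClassicalEpsilon.
From Coquelicot Require Import Coquelicot.
Open Scope C_scope.

Definition inD (z : C) : Prop := (Cmod z < 1)%R.

Definition Cderiv (f : C -> C) (z : C) : C :=
  epsilon (inhabits (RtoC 0))
    (fun d => @is_derive C_AbsRing C_NormedModule f z d).

Definition analytic_on_D (f : C -> C) : Prop :=
  forall z, inD z -> @ex_derive C_AbsRing C_NormedModule f z.

Definition classA (f : C -> C) : Prop :=
  analytic_on_D f /\ f (RtoC 0) = RtoC 0 /\
  @is_derive C_AbsRing C_NormedModule f (RtoC 0) (RtoC 1).

(* complex cosine: cos(x+iy) = cos x cosh y - i sin x sinh y *)
Definition Ccos (z : C) : C :=
  ((cos (Re z) * cosh (Im z))%R, (- (sin (Re z) * sinh (Im z)))%R).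

Definition subordinate_on_D (g h : C -> C) : Prop :=
  exists w : C -> C,
    analytic_on_D w /\ (forall z, inD z -> inD (w z)) /\ w (RtoC 0) = RtoC 0 /\
    (forall z, inD z -> g z = h (w z)).

(* z f'(z)/f(z), extended by its limit value 1 at z = 0 (f in A) *)
Definition zfpf (f : C -> C) (z : C) : C :=
  match excluded_middle_informative (z = RtoC 0) with
  | left _ => RtoC 1
  | right _ => z * Cderiv f z / f z
  end.

Definition phi_nc (z : C) : C := (RtoC 1 + z) / Ccos z.

(* f(z) ≠ 0 for z ∈ D \ {0}: implicit whenever z f'/f is required to be analytic *)
Definition nonvanishing (f : C -> C) : Prop :=
  forall z, inD z -> z <> RtoC 0 -> f z <> RtoC 0.

Definition S_nc (f : C -> C) : Prop :=
  classA f /\ nonvanishing f /\ subordinate_on_D (zfpf f) phi_nc.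

Definition S_star (f : C -> C) : Prop :=
  classA f /\ nonvanishing f /\ forall z, inD z -> (0 < Re (zfpf f z))%R.

Definition S_star_alpha (alpha : R) (f : C -> C) : Prop :=
  classA f /\ nonvanishing f /\ forall z, inD z -> (alpha < Re (zfpf f z))%R.

Definition mu_beta (beta : R) (f : C -> C) : Prop :=
  classA f /\ nonvanishing f /\ forall z, inD z -> (Re (zfpf f z) < beta)%R.

(* Main.v *)
Require Import Defs.
From Stdlib Require Import Reals Lra ClassicalEpsilon.
From Coquelicot Require Import Coquelicot.

Open Scope R_scope.

Lemma mvt_bound (f df : R -> R) (a b K : R) :
  (forall x, is_derive f x (df x)) ->
  (forall x, Rmin a b <= x <= Rmax a b -> Rabs (df x) <= K) ->
  Rabs (f b - f a) <= K * Rabs (b - a).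
Proof.
  intros Hd Hb.
  destruct (MVT_gen f a b df) as [c [Hc E]].
  - intros x _. apply Hd.
  - intros x _. apply continuity_pt_filterlim. apply (ex_derive_continuous (K:=R_AbsRing) (V:=R_NormedModule)).
    exists (df x). apply Hd.
  - rewrite E, Rabs_mult. apply Rmult_le_compat_r. apply Rabs_pos. apply Hb; exact Hc.
Qed.

Lemma Rmin_Rmax_abs (a x : R) : Rmin 0 a <= x <= Rmax 0 a -> Rabs x <= Rabs a.
Proof.
  intros [H1 H2]. unfold Rmin, Rmax in *. destruct (Rle_dec 0 a);
  unfold Rabs; repeat destruct Rcase_abs; lra.
Qed.

Lemma abs_sin_le (b : R) : Rabs (sin b) <= Rabs b.
Proof.
  pose proof (mvt_bound sin cos 0 b 1) as H.
  rewrite sin_0, !Rminus_0_r, Rmult_1_l in H. apply H.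
  - intros x. apply is_derive_Reals. apply derivable_pt_lim_sin.
  - intros x _. pose proof (COS_bound x). unfold Rabs; destruct Rcase_abs; lra.
Qed.

Lemma abs_cos_1 (b : R) : Rabs (cos b - 1) <= b ^ 2.
Proof.
  pose proof (mvt_bound cos (fun x => - sin x) 0 b (Rabs b)) as H.
  rewrite cos_0, !Rminus_0_r in H.
  replace (b ^ 2) with (Rabs b * Rabs b) by (rewrite <- Rabs_mult; rewrite Rabs_pos_eq; nra).
  apply H.
  - intros x. apply is_derive_Reals. apply derivable_pt_lim_cos.
  - intros x Hx. rewrite Rabs_Ropp. eapply Rle_trans. apply abs_sin_le.
    apply Rmin_Rmax_abs; exact Hx.
Qed.

Lemma abs_sin_sub (b : R) : Rabs (sin b - b) <= Rabs b ^ 3.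
Proof.
  pose proof (mvt_bound (fun x => sin x - x) (fun x => cos x - 1) 0 b (b ^ 2)) as H.
  cbv beta in H. rewrite sin_0 in H. replace (sin b - b - (0 - 0)) with (sin b - b) in H by ring.
  rewrite Rminus_0_r in H.
  replace (Rabs b ^ 3) with (b ^ 2 * Rabs b).
  apply H.
  - intros x. auto_derive; auto; ring.
  - intros x Hx. eapply Rle_trans. apply abs_cos_1.
    pose proof (Rmin_Rmax_abs _ _ Hx). 
    rewrite <- (pow2_abs x), <- (pow2_abs b). apply pow_incr. split. apply Rabs_pos. auto.
  - rewrite <- (pow2_abs b). ring.
Qed.

Lemma exp_le_exp (x y : R) : x <= y -> exp x <= exp y.
Proof. intros [H|H]. left; apply exp_increasing; auto. subst; lra. Qed.

Lemma abs_exp_1 (a : R) : Rabs a <= 2 -> Rabs (exp a - 1) <= exp 2 * Rabs a.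
Proof.
  intros Ha.
  pose proof (mvt_bound exp exp 0 a (exp 2)) as H.
  rewrite exp_0, Rminus_0_r in H. apply H.
  - intros x. apply is_derive_Reals. apply derivable_pt_lim_exp.
  - intros x Hx. pose proof (Rmin_Rmax_abs _ _ Hx). rewrite Rabs_pos_eq.
    apply exp_le_exp. pose proof (Rle_abs x); lra.
    left; apply exp_pos.
Qed.

Lemma abs_exp_sub (a : R) : Rabs a <= 2 -> Rabs (exp a - 1 - a) <= exp 2 * a ^ 2.
Proof.
  intros Ha.
  pose proof (mvt_bound (fun x => exp x - x) (fun x => exp x - 1) 0 a (exp 2 * Rabs a)) as H.
  cbv beta in H. rewrite exp_0, !Rminus_0_r in H.
  replace (exp a - a - 1) with (exp a - 1 - a) in H by ring.
  replace (exp 2 * a ^ 2) with (exp 2 * Rabs a * Rabs a)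
    by (rewrite Rmult_assoc, <- Rabs_mult, Rabs_pos_eq; nra).
  apply H.
  - intros x. auto_derive; auto; ring.
  - intros x Hx. pose proof (Rmin_Rmax_abs _ _ Hx).
    eapply Rle_trans. apply abs_exp_1. lra.
    apply Rmult_le_compat_l. left; apply exp_pos. auto.
Qed.

Open Scope C_scope.

Lemma Cmod_sq (z : C) : (Cmod z ^ 2 = Re z ^ 2 + Im z ^ 2)%R.
Proof. apply Cmod2_alt. Qed.

Lemma Cmod_le_sum (z : C) : (Cmod z <= Rabs (Re z) + Rabs (Im z))%R.
Proof.
  pose proof (Cmod_sq z). pose proof (Cmod_ge_0 z).
  pose proof (Rabs_pos (Re z)). pose proof (Rabs_pos (Im z)).
  rewrite <- (pow2_abs (Re z)), <- (pow2_abs (Im z)) in H. nra.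
Qed.

Lemma re_le (z : C) : (Rabs (Re z) <= Cmod z)%R.
Proof. apply re_le_Cmod. Qed.

Lemma im_le (z : C) : (Rabs (Im z) <= Cmod z)%R.
Proof.
  pose proof (Cmod_sq z). pose proof (Cmod_ge_0 z).
  pose proof (Rabs_pos (Im z)).
  rewrite <- (pow2_abs (Re z)), <- (pow2_abs (Im z)) in H. nra.
Qed.

Definition Cexp (z : C) : C := (exp (Re z) * cos (Im z), exp (Re z) * sin (Im z))%R.

Lemma Cexp_add (u v : C) : Cexp (u + v) = Cexp u * Cexp v.
Proof.
  destruct u as [a b], v as [c d]. unfold Cexp, Cmult, Cplus. simpl.
  rewrite exp_plus, cos_plus, sin_plus. f_equal; ring.
Qed.

Lemma Cmod_Cexp (u : C) : Cmod (Cexp u) = exp (Re u).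
Proof.
  destruct u as [a b]. unfold Cexp, Cmod. simpl.
  replace (exp a * cos b * (exp a * cos b * 1) + exp a * sin b * (exp a * sin b * 1))%R
    with (exp a * exp a * (sin b ^ 2 + cos b ^ 2))%R by ring.
  rewrite <- !Rsqr_pow2, sin2_cos2, Rmult_1_r. apply sqrt_square. left; apply exp_pos.
Qed.

Lemma Cexp_0 : Cexp 0 = 1.
Proof. unfold Cexp. simpl. rewrite exp_0, cos_0, sin_0. apply injective_projections; simpl; ring. Qed.

Lemma Cexp_neq0 (u : C) : Cexp u <> 0.
Proof.
  intros H. pose proof (Cmod_Cexp u). rewrite H, Cmod_0 in H0.
  pose proof (exp_pos (Re u)). lra.
Qed.

Lemma Cexp_small (d : C) : (Cmod d <= 2)%R ->
  (Cmod (Cexp d - 1 - d) <= 4 * exp 2 * Cmod d ^ 2)%R.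
Proof.
  intros Hd. destruct d as [a b].
  pose proof (re_le (a, b)) as Ha. pose proof (im_le (a, b)) as Hb. simpl in Ha, Hb.
  pose proof (Cmod_sq (a,b)) as Hs. simpl Re in Hs; simpl Im in Hs.
  eapply Rle_trans. apply Cmod_le_sum.
  unfold Cexp, Cminus, Cplus, Copp, RtoC. cbn [fst snd Re Im].
  match goal with |- (Rabs ?X + Rabs ?Y <= _)%R =>
   replace X with (exp a * (cos b - 1) + (exp a - 1 - a))%R by ring;
   replace Y with (exp a * (sin b - b) + (exp a - 1) * b)%R by ring end.
  assert (Ea : (exp a <= exp 2)%R). { apply exp_le_exp. pose proof (Rle_abs a). lra. }
  assert (E2 : (0 < exp 2)%R) by apply exp_pos.
  assert (Ha2 : (Rabs a <= 2)%R) by lra.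
  assert (Hb2 : (Rabs b <= 2)%R) by lra.
  pose proof (abs_cos_1 b). pose proof (abs_sin_sub b). pose proof (abs_exp_1 a Ha2).
  pose proof (abs_exp_sub a Ha2).
  pose proof (Rabs_pos a). pose proof (Rabs_pos b). pose proof (exp_pos a).
  assert (X1 : (Rabs (exp a * (cos b - 1) + (exp a - 1 - a)) <= exp 2 * b ^ 2 + exp 2 * a ^ 2)%R).
  { eapply Rle_trans. apply Rabs_triang. rewrite Rabs_mult, (Rabs_pos_eq (exp a)) by lra.
    pose proof (Rabs_pos (cos b - 1)). nra. }
  assert (X2 : (Rabs (exp a * (sin b - b) + (exp a - 1) * b) <= exp 2 * (2 * b ^ 2) + exp 2 * (Rabs a * Rabs b))%R).
  { eapply Rle_trans. apply Rabs_triang. rewrite !Rabs_mult, (Rabs_pos_eq (exp a)) by lra.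
    pose proof (Rabs_pos (sin b - b)). pose proof (Rabs_pos (exp a - 1)).
    assert (Rabs b ^ 3 <= 2 * b ^ 2)%R.
    { rewrite <- (pow2_abs b). simpl. nra. }
    nra. }
  assert (AB : (Rabs a * Rabs b <= Cmod (a, b) ^ 2)%R).
  { rewrite Hs. rewrite <- (pow2_abs a), <- (pow2_abs b). nra. }
  assert (Ha' : (a ^ 2 <= Cmod (a,b) ^ 2)%R) by nra.
  assert (Hb' : (b ^ 2 <= Cmod (a,b) ^ 2)%R) by nra.
  assert (exp 2 * b ^ 2 <= exp 2 * Cmod (a,b) ^ 2)%R by (apply Rmult_le_compat_l; lra).
  assert (exp 2 * a ^ 2 <= exp 2 * Cmod (a,b) ^ 2)%R by (apply Rmult_le_compat_l; lra).
  assert (exp 2 * (Rabs a * Rabs b) <= exp 2 * Cmod (a,b) ^ 2)%R by (apply Rmult_le_compat_l; lra).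
  assert (E : (exp 2 * b ^ 2 + exp 2 * a ^ 2 = exp 2 * Cmod (a,b) ^ 2)%R) by (rewrite Hs; ring).
  assert (E' : (exp 2 * (2 * b ^ 2) = 2 * (exp 2 * b ^ 2))%R) by ring.
  assert (E'' : (4 * exp 2 * Cmod (a, b) ^ 2 = 4 * (exp 2 * Cmod (a, b) ^ 2))%R) by ring.
  lra.
Qed.

Open Scope C_scope.

Definition UD (u : C) : Prop := (Cmod u <= 1)%R.

Definition TB (F F' : C -> C) : Prop :=
  exists B0 B1 M : R, (0 <= M)%R /\
   (forall u, UD u -> Cmod (F u) <= B0 /\ Cmod (F' u) <= B1)%R /\
   (forall u v, UD u -> UD v ->
      Cmod (F v - F u - (v - u) * F' u) <= M * Cmod (v - u) ^ 2)%R.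

Lemma Cmod_sub_le (x y : C) : (Cmod (x - y) <= Cmod x + Cmod y)%R.
Proof. unfold Cminus. eapply Rle_trans. apply Cmod_triangle. rewrite Cmod_opp. lra. Qed.

Lemma Cmod_sub_sym (x y : C) : Cmod (x - y) = Cmod (y - x).
Proof. replace (x - y) with (- (y - x)) by ring. apply Cmod_opp. Qed.

Lemma UD_diff (u v : C) : UD u -> UD v -> (Cmod (v - u) <= 2)%R.
Proof. unfold UD; intros. pose proof (Cmod_sub_le v u). lra. Qed.

Lemma Cmod3 (x y z : C) : (Cmod (x + y + z) <= Cmod x + Cmod y + Cmod z)%R.
Proof.
  eapply Rle_trans. apply Cmod_triangle. pose proof (Cmod_triangle x y). lra.
Qed.

Lemma TB_diff (F F' : C -> C) : TB F F' ->
  exists K, (0 <= K)%R /\ forall u v, UD u -> UD v -> (Cmod (F v - F u) <= K * Cmod (v - u))%R.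
Proof.
  intros (B0 & B1 & M & HM & HB & HT).
  exists (Rmax 0 B1 + 2 * M)%R. split. pose proof (Rmax_l 0 B1). lra.
  intros u v Hu Hv.
  replace (F v - F u) with ((F v - F u - (v - u) * F' u) + (v - u) * F' u) by ring.
  eapply Rle_trans. apply Cmod_triangle. rewrite Cmod_mult.
  specialize (HT u v Hu Hv). destruct (HB u Hu) as [_ H1].
  pose proof (UD_diff u v Hu Hv). pose proof (Cmod_ge_0 (v - u)).
  pose proof (Rmax_r 0 B1).
  assert (Cmod (v - u) * Cmod (F' u) <= Cmod (v - u) * Rmax 0 B1)%R by (apply Rmult_le_compat_l; lra).
  assert (M * Cmod (v - u) ^ 2 <= 2 * M * Cmod (v - u))%R.
  { assert (Cmod (v - u) ^ 2 <= 2 * Cmod (v - u))%R by (simpl; nra).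
    replace (2 * M * Cmod (v - u))%R with (M * (2 * Cmod (v - u)))%R by ring.
    apply Rmult_le_compat_l; auto. }
  nra.
Qed.

Lemma TB_lip (F F' : C -> C) : TB F F' ->
  exists K, (0 <= K)%R /\ forall u v, UD u -> UD v -> (Cmod (F' v - F' u) <= K * Cmod (v - u))%R.
Proof.
  intros (B0 & B1 & M & HM & HB & HT).
  exists (2 * M)%R. split. lra. intros u v Hu Hv.
  destruct (Ceq_dec v u) as [E|E].
  { subst. replace (u - u) with (RtoC 0) by ring. replace (F' u - F' u) with (RtoC 0) by ring. rewrite Cmod_0. lra. }
  assert (Hd : Cmod (v - u) <> 0%R).
  { intros H. apply E. apply Cmod_eq_0 in H. 
    replace v with ((v - u) + u) by ring. rewrite H. ring. }
  pose proof (Cmod_ge_0 (v - u)).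
  assert (Cmod ((v - u) * (F' v - F' u)) <= 2 * M * Cmod (v - u) ^ 2)%R.
  { replace ((v - u) * (F' v - F' u)) with
      ((F v - F u - (v - u) * F' u) + (F u - F v - (u - v) * F' v)) by ring.
    eapply Rle_trans. apply Cmod_triangle.
    pose proof (HT u v Hu Hv). pose proof (HT v u Hv Hu). rewrite (Cmod_sub_sym u v) in H1.
    lra. }
  rewrite Cmod_mult in H0.
  apply Rmult_le_reg_l with (Cmod (v - u)). lra. simpl in H0. nra.
Qed.

Lemma TB_ext (F F' G G' : C -> C) : TB F F' ->
  (forall u, UD u -> F u = G u) -> (forall u, UD u -> F' u = G' u) -> TB G G'.
Proof.
  intros (B0 & B1 & M & HM & HB & HT) E E'. exists B0, B1, M. split; auto. split.
  - intros u Hu. rewrite <- E, <- E'; auto.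
  - intros u v Hu Hv. rewrite <- E, <- E, <- E'; auto.
Qed.

Lemma TB_const (a : C) : TB (fun _ => a) (fun _ => 0).
Proof.
  exists (Cmod a), 0%R, 0%R. split. lra. split.
  - intros. rewrite Cmod_0. lra.
  - intros. replace (a - a - (v - u) * 0) with (RtoC 0) by ring. rewrite Cmod_0. lra.
Qed.

Lemma TB_id : TB (fun u => u) (fun _ => 1).
Proof.
  exists 1%R, 1%R, 0%R. split. lra. split.
  - intros u Hu. rewrite Cmod_1. split; auto. lra.
  - intros. replace (v - u - (v - u) * 1) with (RtoC 0) by ring. rewrite Cmod_0. lra.
Qed.

Lemma TB_plus (F F' G G' : C -> C) : TB F F' -> TB G G' ->
  TB (fun u => F u + G u) (fun u => F' u + G' u).
Proof.
  intros (B0 & B1 & M & HM & HB & HT) (C0 & C1 & N & HN & HC & HU).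
  exists (B0 + C0)%R, (B1 + C1)%R, (M + N)%R. split. lra. split.
  - intros u Hu. destruct (HB u Hu), (HC u Hu).
    split; eapply Rle_trans; try apply Cmod_triangle; lra.
  - intros u v Hu Hv.
    replace (F v + G v - (F u + G u) - (v - u) * (F' u + G' u)) with
      ((F v - F u - (v - u) * F' u) + (G v - G u - (v - u) * G' u)) by ring.
    eapply Rle_trans. apply Cmod_triangle.
    pose proof (HT u v Hu Hv). pose proof (HU u v Hu Hv). lra.
Qed.

Lemma TB_scal (k : C) (F F' : C -> C) : TB F F' -> TB (fun u => k * F u) (fun u => k * F' u).
Proof.
  intros (B0 & B1 & M & HM & HB & HT).
  exists (Cmod k * B0)%R, (Cmod k * B1)%R, (Cmod k * M)%R.
  pose proof (Cmod_ge_0 k). split. nra. split.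
  - intros u Hu. destruct (HB u Hu). rewrite !Cmod_mult.
    split; apply Rmult_le_compat_l; auto.
  - intros u v Hu Hv.
    replace (k * F v - k * F u - (v - u) * (k * F' u)) with
      (k * (F v - F u - (v - u) * F' u)) by ring.
    rewrite Cmod_mult, Rmult_assoc. apply Rmult_le_compat_l; auto.
Qed.

Lemma TB_lin (a : C) (F F' : C -> C) : Cmod a = 1%R -> TB F F' ->
  TB (fun u => F (a * u)) (fun u => a * F' (a * u)).
Proof.
  intros Ha (B0 & B1 & M & HM & HB & HT).
  assert (HU : forall u, UD u -> UD (a * u)).
  { unfold UD; intros u Hu. rewrite Cmod_mult, Ha. lra. }
  exists B0, B1, M. split; auto. split.
  - intros u Hu. destruct (HB _ (HU u Hu)). rewrite Cmod_mult, Ha. lra.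
  - intros u v Hu Hv.
    replace (F (a * v) - F (a * u) - (v - u) * (a * F' (a * u))) with
      (F (a * v) - F (a * u) - (a * v - a * u) * F' (a * u)) by ring.
    eapply Rle_trans. apply HT; auto.
    replace (a * v - a * u) with (a * (v - u)) by ring. rewrite Cmod_mult, Ha, Rmult_1_l. lra.
Qed.

Open Scope C_scope.

Lemma UD0 : UD 0.
Proof. unfold UD. rewrite Cmod_0. lra. Qed.

Lemma TB_mult (F F' G G' : C -> C) : TB F F' -> TB G G' ->
  TB (fun u => F u * G u) (fun u => F' u * G u + F u * G' u).
Proof.
  intros HF HG.
  destruct (TB_diff _ _ HG) as (KG & HKG & HdG).
  destruct HF as (B0 & B1 & M & HM & HB & HT).
  destruct HG as (C0 & C1 & N & HN & HC & HU).
  assert (P : (0 <= B0 /\ 0 <= B1 /\ 0 <= C0 /\ 0 <= C1)%R).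
  { destruct (HB 0 UD0), (HC 0 UD0).
    pose proof (Cmod_ge_0 (F 0)). pose proof (Cmod_ge_0 (F' 0)).
    pose proof (Cmod_ge_0 (G 0)). pose proof (Cmod_ge_0 (G' 0)). lra. }
  exists (B0 * C0)%R, (B1 * C0 + B0 * C1)%R, (M * C0 + B1 * KG + B0 * N)%R.
  split. nra. split.
  - intros u Hu. destruct (HB u Hu), (HC u Hu).
    pose proof (Cmod_ge_0 (F u)). pose proof (Cmod_ge_0 (F' u)).
    pose proof (Cmod_ge_0 (G u)). pose proof (Cmod_ge_0 (G' u)).
    rewrite Cmod_mult. split. nra.
    eapply Rle_trans. apply Cmod_triangle. rewrite !Cmod_mult. nra.
  - intros u v Hu Hv.
    replace (F v * G v - F u * G u - (v - u) * (F' u * G u + F u * G' u)) with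
      ((F v - F u - (v - u) * F' u) * G v + (v - u) * F' u * (G v - G u)
        + F u * (G v - G u - (v - u) * G' u)) by ring.
    eapply Rle_trans. apply Cmod3. rewrite !Cmod_mult.
    pose proof (HT u v Hu Hv). pose proof (HU u v Hu Hv). pose proof (HdG u v Hu Hv).
    destruct (HB u Hu), (HC v Hv).
    pose proof (Cmod_ge_0 (F v - F u - (v - u) * F' u)).
    pose proof (Cmod_ge_0 (G v - G u - (v - u) * G' u)).
    pose proof (Cmod_ge_0 (G v - G u)). pose proof (Cmod_ge_0 (v - u)).
    pose proof (Cmod_ge_0 (F u)). pose proof (Cmod_ge_0 (F' u)). pose proof (Cmod_ge_0 (G v)).
    set (d := Cmod (v - u)) in *.
    assert (A1 : (Cmod (F v - F u - (v - u) * F' u) * Cmod (G v) <= M * d ^ 2 * C0)%R).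
    { apply Rmult_le_compat; auto. }
    assert (A2 : (d * Cmod (F' u) * Cmod (G v - G u) <= d * B1 * (KG * d))%R).
    { apply Rmult_le_compat; auto. nra. apply Rmult_le_compat_l; auto. }
    assert (A3 : (Cmod (F u) * Cmod (G v - G u - (v - u) * G' u) <= B0 * (N * d ^ 2))%R).
    { apply Rmult_le_compat; auto. }
    replace ((M * C0 + B1 * KG + B0 * N) * d ^ 2)%R with
      (M * d ^ 2 * C0 + d * B1 * (KG * d) + B0 * (N * d ^ 2))%R by ring.
    lra.
Qed.

Lemma TB_inv (G G' : C -> C) (m : R) : (0 < m)%R -> TB G G' ->
  (forall u, UD u -> m <= Cmod (G u))%R ->
  TB (fun u => / G u) (fun u => - G' u / (G u * G u)).
Proof.
  intros Hm HG Hlow.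
  destruct (TB_diff _ _ HG) as (KG & HKG & HdG).
  destruct HG as (C0 & C1 & N & HN & HC & HU).
  assert (P : (0 <= C0 /\ 0 <= C1)%R).
  { destruct (HC 0 UD0). pose proof (Cmod_ge_0 (G 0)). pose proof (Cmod_ge_0 (G' 0)). lra. }
  assert (NZ : forall u, UD u -> G u <> 0).
  { intros u Hu E. pose proof (Hlow u Hu). rewrite E, Cmod_0 in H. lra. }
  exists (/ m)%R, (C1 / (m * m))%R, ((N * C0 + C1 * KG) / (m * m * m))%R.
  split. apply Rmult_le_pos. nra. left. apply Rinv_0_lt_compat. 
  apply Rmult_lt_0_compat; auto. nra. split.
  - intros u Hu. pose proof (Hlow u Hu). destruct (HC u Hu). pose proof (NZ u Hu).
    rewrite Cmod_inv by auto. split.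
    + apply Rinv_le_contravar; auto.
    + unfold Cdiv. rewrite Cmod_mult, Cmod_opp, Cmod_inv, Cmod_mult.
      unfold Rdiv. apply Rmult_le_compat. apply Cmod_ge_0. left. apply Rinv_0_lt_compat.
      pose proof (Cmod_ge_0 (G u)). nra. auto. apply Rinv_le_contravar. nra.
      apply Rmult_le_compat; lra. 
      apply Cmult_neq_0; auto.
  - intros u v Hu Hv.
    pose proof (NZ u Hu). pose proof (NZ v Hv).
    replace (/ G v - / G u - (v - u) * (- G' u / (G u * G u))) with
      ((- (G v - G u - (v - u) * G' u) * G u + (v - u) * G' u * (G v - G u)) / (G u * G u * G v))
      by (field; auto).
    unfold Cdiv. rewrite Cmod_mult, Cmod_inv.
    2:{ repeat apply Cmult_neq_0; auto. }
    rewrite !Cmod_mult.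
    pose proof (HU u v Hu Hv). pose proof (HdG u v Hu Hv).
    destruct (HC u Hu). pose proof (Hlow u Hu). pose proof (Hlow v Hv).
    pose proof (Cmod_ge_0 (G v - G u - (v - u) * G' u)).
    pose proof (Cmod_ge_0 (G v - G u)). pose proof (Cmod_ge_0 (v - u)).
    pose proof (Cmod_ge_0 (G u)). pose proof (Cmod_ge_0 (G' u)).
    set (d := Cmod (v - u)) in *.
    assert (Num : (Cmod (- (G v - G u - (v - u) * G' u) * G u + (v - u) * G' u * (G v - G u))
                   <= (N * C0 + C1 * KG) * d ^ 2)%R).
    { eapply Rle_trans. apply Cmod_triangle. rewrite !Cmod_mult, Cmod_opp.
      fold d.
      assert (A1 : (Cmod (G v - G u - (v - u) * G' u) * Cmod (G u) <= N * d ^ 2 * C0)%R).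
      { apply Rmult_le_compat; auto. }
      assert (A2 : (d * Cmod (G' u) * Cmod (G v - G u) <= d * C1 * (KG * d))%R).
      { apply Rmult_le_compat; auto. nra. apply Rmult_le_compat_l; auto. }
      replace ((N * C0 + C1 * KG) * d ^ 2)%R with (N * d ^ 2 * C0 + d * C1 * (KG * d))%R by ring.
      lra. }
    assert (Den : (/ (Cmod (G u) * Cmod (G u) * Cmod (G v)) <= / (m * m * m))%R).
    { assert (0 < m * m)%R by nra.
      apply Rinv_le_contravar. apply Rmult_lt_0_compat; auto.
      apply Rmult_le_compat; try lra; try nra. }
    unfold Rdiv. 
    replace ((N * C0 + C1 * KG) * / (m * m * m) * d ^ 2)%R with
      ((N * C0 + C1 * KG) * d ^ 2 * / (m * m * m))%R by ring.
    assert (0 < Cmod (G u) * Cmod (G u) * Cmod (G v))%R by (apply Rmult_lt_0_compat; [apply Rmult_lt_0_compat|]; lra).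
    apply Rmult_le_compat; auto. apply Cmod_ge_0. left. apply Rinv_0_lt_compat. auto.
Qed.

Open Scope C_scope.

Lemma Cplus_sub (z y : C) : z + (y - z) = y.
Proof. ring. Qed.

Lemma Cderiv_of_eps (f : C -> C) (z l : C) :
  (forall eps : posreal, exists del : posreal, forall h : C,
     Rlt (Cmod h) del -> Rle (Cmod (f (z + h) - f z - h * l)) (eps * Cmod h)%R) ->
  @is_derive C_AbsRing C_NormedModule f z l.
Proof.
  intros H. split.
  - apply is_linear_scal_l.
  - intros x Hx. apply (@is_filter_lim_locally_unique C_AbsRing (AbsRing_NormedModule C_AbsRing)) in Hx. subst x.
    intros eps.
    destruct (H eps) as [del Hd]. exists del. intros y Hy.
    change (Rlt (Cmod (y - z)) del) in Hy.
    change (Rle (Cmod (f y - f z - (y - z) * l)) (eps * Cmod (y - z))).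
    specialize (Hd (y - z) Hy). 
    rewrite Cplus_sub in Hd. exact Hd.
Qed.

Lemma Cderiv_eps (f : C -> C) (z l : C) :
  @is_derive C_AbsRing C_NormedModule f z l ->
  (forall eps : posreal, exists del : posreal, forall h : C,
     Rlt (Cmod h) del -> Rle (Cmod (f (z + h) - f z - h * l)) (eps * Cmod h)%R).
Proof.
  intros [_ H] eps.
  specialize (H z (fun P HP => HP) eps).
  destruct H as [del Hd]. exists del. intros h Hh.
  specialize (Hd (z + h)).
  assert (E : z + h - z = h) by ring.
  change (Rlt (Cmod (z + h - z)) del -> Rle (Cmod (f (z+h) - f z - (z + h - z) * l)) (eps * Cmod (z + h - z))) in Hd.
  rewrite E in Hd. apply Hd. exact Hh.
Qed.

Open Scope C_scope.

Lemma TB_Cexp : TB Cexp Cexp.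
Proof.
  assert (HB : forall u, UD u -> (Cmod (Cexp u) <= exp 1)%R).
  { intros u Hu. rewrite Cmod_Cexp. apply exp_le_exp. pose proof (re_le u).
    pose proof (Rle_abs (Re u)). unfold UD in Hu. lra. }
  exists (exp 1), (exp 1), (exp 1 * (4 * exp 2))%R.
  pose proof (exp_pos 1). pose proof (exp_pos 2). split. nra. split.
  - intros u Hu. split; apply HB; auto.
  - intros u v Hu Hv.
    replace (Cexp v - Cexp u - (v - u) * Cexp u) with
      (Cexp u * (Cexp (v - u) - 1 - (v - u))).
    2:{ replace (Cexp v) with (Cexp (u + (v - u))) by (f_equal; ring).
        rewrite Cexp_add. ring. }
    rewrite Cmod_mult.
    replace (exp 1 * (4 * exp 2) * Cmod (v - u) ^ 2)%R with (exp 1 * (4 * exp 2 * Cmod (v - u) ^ 2))%R by ring.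
    apply Rmult_le_compat. apply Cmod_ge_0. apply Cmod_ge_0. apply HB; auto.
    apply Cexp_small. apply UD_diff; auto.
Qed.

Lemma TB_derive (F F' : C -> C) (u : C) : TB F F' -> (Cmod u < 1)%R ->
  @is_derive C_AbsRing C_NormedModule F u (F' u).
Proof.
  intros (B0 & B1 & M & HM & HB & HT) Hu.
  apply Cderiv_of_eps. intros eps.
  assert (P : (0 < Rmin (1 - Cmod u) (eps / (M + 1)))%R).
  { apply Rmin_pos. lra. apply Rdiv_lt_0_compat. apply cond_pos. lra. }
  exists (mkposreal _ P). intros h Hh. simpl in Hh.
  pose proof (Rmin_l (1 - Cmod u) (eps / (M + 1))).
  pose proof (Rmin_r (1 - Cmod u) (eps / (M + 1))).
  assert (UDu : UD u) by (unfold UD; lra).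
  assert (UDv : UD (u + h)).
  { unfold UD. eapply Rle_trans. apply Cmod_triangle. lra. }
  specialize (HT u (u + h) UDu UDv).
  replace (u + h - u) with h in HT by ring.
  eapply Rle_trans. apply HT.
  pose proof (Cmod_ge_0 h).
  assert (M * Cmod h <= eps)%R.
  { apply Rle_trans with (M * (eps / (M + 1)))%R. apply Rmult_le_compat_l; lra.
    unfold Rdiv. rewrite <- Rmult_assoc. 
    apply Rle_trans with ((M + 1) * eps * / (M + 1))%R.
    apply Rmult_le_compat_r. left. apply Rinv_0_lt_compat. lra.
    pose proof (cond_pos eps). nra.
    field_simplify. lra. lra. }
  replace (M * Cmod h ^ 2)%R with ((M * Cmod h) * Cmod h)%R by ring.
  apply Rmult_le_compat_r; auto.
Qed.

Lemma cosh_ge_1 (y : R) : (1 <= cosh y)%R.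
Proof.
  unfold cosh. rewrite exp_Ropp. pose proof (exp_pos y).
  assert (exp y * / exp y = 1)%R by (field; lra).
  assert (0 < / exp y)%R by (apply Rinv_0_lt_compat; lra).
  assert (0 <= (exp y - 1) ^ 2 * / exp y)%R by (apply Rmult_le_pos; [apply pow2_ge_0 | lra]).
  assert ((exp y - 1) ^ 2 * / exp y = exp y + / exp y - 2)%R by (field; lra).
  lra.
Qed.


Open Scope R_scope.

Lemma PI_gt3 : 3 < PI.
Proof. pose proof PI2_3_2. lra. Qed.

Lemma cos1_ge : 1/2 <= cos 1.
Proof.
  pose proof (cos_bound 1 0) as H. pose proof PI_gt3.
  destruct H as [H _]. lra. lra.
  eapply Rle_trans; [|exact H].
  unfold cos_approx, cos_term. simpl. lra.
Qed.

Lemma cos_ge_cos1 (x : R) : Rabs x <= 1 -> cos 1 <= cos x.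
Proof.
  intros Hx. pose proof PI_gt3.
  assert (cos x = cos (Rabs x)).
  { unfold Rabs. destruct Rcase_abs. rewrite <- cos_sym. auto. auto. }
  rewrite H0. apply cos_decr_1; try lra. apply Rabs_pos.
Qed.

Lemma cosh_even (y : R) : cosh (- y) = cosh y.
Proof. unfold cosh. rewrite Ropp_involutive. rewrite Rplus_comm. reflexivity. Qed.

Lemma cosh_mono (a b : R) : 0 <= b <= a -> cosh b <= cosh a.
Proof.
  intros [Hb Hba]. unfold cosh.
  assert (E : exp a + exp (- a) - (exp b + exp (- b)) = (exp a - exp b) * (1 - exp (- a) * exp (- b))).
  { assert (H1 : exp a * exp (- a) = 1) by (rewrite <- exp_plus, Rplus_opp_r, exp_0; auto).
    assert (H2 : exp b * exp (- b) = 1) by (rewrite <- exp_plus, Rplus_opp_r, exp_0; auto).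
    replace ((exp a - exp b) * (1 - exp (- a) * exp (- b))) with
      (exp a - exp b - (exp a * exp (- a)) * exp (- b) + (exp b * exp (- b)) * exp (- a)) by ring.
    rewrite H1, H2. ring. }
  assert (exp b <= exp a) by (apply exp_le_exp; lra).
  assert (exp (- a) * exp (- b) <= 1).
  { rewrite <- exp_plus, <- exp_0. apply exp_le_exp. lra. }
  nra.
Qed.

Lemma cosh_abs (y : R) : cosh y = cosh (Rabs y).
Proof. unfold Rabs. destruct Rcase_abs. rewrite cosh_even. auto. auto. Qed.

Lemma abs_sinh_le (y : R) : Rabs (sinh y) <= Rabs y * cosh y.
Proof.
  pose proof (mvt_bound sinh cosh 0 y (cosh y)) as H.
  replace (sinh 0) with 0 in H by (unfold sinh; rewrite Ropp_0; field).
  rewrite !Rminus_0_r in H.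
  rewrite Rmult_comm. apply H.
  - intros x. unfold sinh, cosh. auto_derive; auto. field.
  - intros x Hx. pose proof (Rmin_Rmax_abs _ _ Hx).
    assert (0 < cosh x) by (pose proof (cosh_ge_1 x); lra).
    rewrite Rabs_pos_eq by lra. rewrite (cosh_abs x), (cosh_abs y).
    apply cosh_mono. split; auto. apply Rabs_pos.
Qed.

Lemma sinh_sign (y : R) : 0 <= y * sinh y.
Proof.
  unfold sinh. destruct (Rle_dec 0 y).
  - assert (exp (- y) <= exp y) by (apply exp_le_exp; lra). 
    apply Rmult_le_pos; auto. lra.
  - assert (exp y <= exp (- y)) by (apply exp_le_exp; lra).
    assert (y * ((exp y - exp (- y)) / 2) = (- y) * ((exp (- y) - exp y) / 2)) by field.
    rewrite H0. apply Rmult_le_pos; lra.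
Qed.

Open Scope R_scope.

Lemma Ccos_low (u : C) : Cmod u <= 1 -> cos 1 <= Cmod (Ccos u).
Proof.
  intros Hu. destruct u as [x y].
  pose proof (re_le (x, y)). simpl in H.
  pose proof (cos_ge_cos1 x ltac:(lra)).
  pose proof (cos1_ge).
  eapply Rle_trans; [| apply re_le]. unfold Ccos. simpl.
  pose proof (cosh_ge_1 y).
  rewrite Rabs_pos_eq by nra. nra.
Qed.

Lemma Ccos_neq0 (u : C) : Cmod u <= 1 -> Ccos u <> 0%C.
Proof.
  intros Hu E. pose proof (Ccos_low u Hu). rewrite E, Cmod_0 in H.
  pose proof cos1_ge. lra.
Qed.

Lemma Re_phi (x y : R) : 0 < cos x ->
  Re (phi_nc (x, y)) = ((1 + x) * (cos x * cosh y) - y * (sin x * sinh y)) /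
     ((cos x * cosh y) ^ 2 + (sin x * sinh y) ^ 2).
Proof.
  intros Hc. pose proof (cosh_ge_1 y).
  assert (0 < cos x * cosh y) by nra.
  assert (0 < (cos x * cosh y) ^ 2 + (sin x * sinh y) ^ 2) by nra.
  unfold phi_nc, Ccos, Cdiv, Cinv, Cmult, Cplus, RtoC. simpl. field. nra.
Qed.

Lemma Re_phi_pos (u : C) : Cmod u < 1 -> 0 < Re (phi_nc u).
Proof.
  intros Hu. destruct u as [x y].
  pose proof (Cmod_sq (x, y)) as Hs. simpl in Hs.
  pose proof (Cmod_ge_0 (x,y)).
  assert (Hxy : x ^ 2 + y ^ 2 < 1) by nra.
  assert (Hx : -1 < x < 1) by nra.
  pose proof PI_gt3.
  assert (Hc : 0 < cos x) by (apply cos_gt_0; lra).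
  rewrite Re_phi by auto.
  pose proof (cosh_ge_1 y).
  assert (0 < cos x * cosh y) by nra.
  assert (0 < (cos x * cosh y) ^ 2 + (sin x * sinh y) ^ 2) by nra.
  apply Rdiv_lt_0_compat; auto.
  pose proof (sinh_sign y).
  destruct (Rle_dec x 0).
  - assert (sin x <= 0).
    { rewrite <- (Ropp_involutive x), sin_neg. pose proof (sin_ge_0 (- x)). lra. }
    assert (0 < (1 + x) * (cos x * cosh y)) by (apply Rmult_lt_0_compat; nra).
    nra.
  - assert (0 <= sin x) by (apply sin_ge_0; lra).
    assert (sin x <= x) by (pose proof (abs_sin_le x); rewrite !Rabs_pos_eq in H6; lra).
    pose proof (abs_sinh_le y).
    assert (y * sinh y <= y ^ 2 * cosh y).
    { pose proof (Rle_abs (y * sinh y)). rewrite Rabs_mult in H8.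
      rewrite <- (pow2_abs y). pose proof (Rabs_pos y). nra. }
    pose proof (cos_ge_cos1 x ltac:(rewrite Rabs_pos_eq; lra)).
    pose proof cos1_ge.
    assert (sin x * (1 - x) < cos x) by nra.
    assert (y * (sin x * sinh y) <= sin x * (y ^ 2 * cosh y)) by nra.
    assert (sin x * (y ^ 2 * cosh y) <= sin x * ((1 - x ^ 2) * cosh y)).
    { apply Rmult_le_compat_l; auto. apply Rmult_le_compat_r; nra. }
    assert (sin x * ((1 - x ^ 2) * cosh y) < (1 + x) * (cos x * cosh y)).
    { replace (sin x * ((1 - x ^ 2) * cosh y)) with ((1 + x) * (sin x * (1 - x)) * cosh y) by ring.
      replace ((1 + x) * (cos x * cosh y)) with ((1 + x) * cos x * cosh y) by ring.
      apply Rmult_lt_compat_r. lra. apply Rmult_lt_compat_l; lra. }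
    lra.
Qed.

Lemma Re_phi_lt (u : C) : Cmod u < 1 -> Re (phi_nc u) < 2 / cos 1.
Proof.
  intros Hu. pose proof cos1_ge.
  assert (Hn : Ccos u <> 0%C) by (apply Ccos_neq0; lra).
  pose proof (Ccos_low u ltac:(lra)).
  apply Rle_lt_trans with (Cmod (phi_nc u)).
  { eapply Rle_trans. apply Rle_abs. apply re_le. }
  unfold phi_nc. rewrite Cmod_div by auto.
  assert (Cmod (1 + u) < 2).
  { eapply Rle_lt_trans. apply Cmod_triangle. rewrite Cmod_1. lra. }
  pose proof (Cmod_ge_0 (1 + u)).
  unfold Rdiv. apply Rle_lt_trans with (Cmod (1 + u) * / cos 1).
  apply Rmult_le_compat_l; auto. apply Rinv_le_contravar; lra.
  apply Rmult_lt_compat_r. apply Rinv_0_lt_compat; lra. auto.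
Qed.

Open Scope C_scope.

Lemma Ccos_eq (u : C) : Ccos u = / 2 * (Cexp (Ci * u) + Cexp (- Ci * u)).
Proof.
  destruct u as [x y]. unfold Ccos, Cexp, Ci, Cmult, Cplus, Copp, Cinv, RtoC. simpl.
  replace (0 * x - 1 * y)%R with (- y)%R by ring.
  replace (0 * y + 1 * x)%R with x by ring.
  replace (- 0 * x - - (1) * y)%R with y by ring.
  replace (- 0 * y + - (1) * x)%R with (- x)%R by ring.
  rewrite cos_neg, sin_neg. unfold cosh, sinh.
  apply injective_projections; simpl; field.
Qed.

Lemma Cmod_Ci : Cmod Ci = 1%R.
Proof. unfold Cmod, Ci. simpl. replace (0 * (0 * 1) + 1 * (1 * 1))%R with 1%R by ring. apply sqrt_1. Qed.

Lemma Cmod_mCi : Cmod (- Ci) = 1%R.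
Proof. rewrite Cmod_opp. apply Cmod_Ci. Qed.

Lemma TB_cos : exists c', TB Ccos c'.
Proof.
  pose proof (TB_lin Ci _ _ Cmod_Ci TB_Cexp) as H1.
  pose proof (TB_lin (- Ci) _ _ Cmod_mCi TB_Cexp) as H2.
  pose proof (TB_scal (/ 2) _ _ (TB_plus _ _ _ _ H1 H2)) as H3.
  eexists. eapply TB_ext. exact H3.
  - intros u _. symmetry. apply Ccos_eq.
  - intros u _. reflexivity.
Qed.

Lemma TB_phi : exists p', TB phi_nc p'.
Proof.
  destruct TB_cos as [c' Hc].
  pose proof (TB_inv _ _ (cos 1) ltac:(pose proof cos1_ge; lra) Hc Ccos_low) as Hi.
  pose proof (TB_plus _ _ _ _ (TB_const 1) TB_id) as Hl.
  pose proof (TB_mult _ _ _ _ Hl Hi) as Hm.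
  eexists. eapply TB_ext. exact Hm.
  - intros u _. reflexivity.
  - intros u _. reflexivity.
Qed.

Lemma phi_0 : phi_nc 0 = 1.
Proof.
  unfold phi_nc, Ccos. simpl. rewrite cos_0, sin_0.
  replace (cosh 0) with 1%R by (unfold cosh; rewrite Ropp_0, exp_0; field).
  replace (1 * 1)%R with 1%R by ring. replace (- (0 * sinh 0))%R with 0%R by ring.
  change (1 + 0) with (RtoC 1 + RtoC 0). change (1%R, 0%R) with (RtoC 1).
  field.
Qed.

Open Scope C_scope.

Lemma normCR (x : C) : @norm R_AbsRing C_R_NormedModule x = Cmod x.
Proof.
  destruct x as [a b]. unfold Cmod. simpl.
  change (sqrt (Rabs a ^ 2 + Rabs b ^ 2) = sqrt (a ^ 2 + b ^ 2))%R.
  rewrite !pow2_abs. reflexivity.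
Qed.

Lemma Rderiv_of_eps (f : R -> C) (t : R) (l : C) :
  (forall eps : posreal, exists del : posreal, forall h : R,
     Rlt (Rabs h) del -> Rle (Cmod (f (t + h)%R - f t - RtoC h * l)) (eps * Rabs h)%R) ->
  @is_derive R_AbsRing C_R_NormedModule f t l.
Proof.
  intros H. split.
  - apply is_linear_scal_l.
  - intros x Hx. apply (@is_filter_lim_locally_unique R_AbsRing (AbsRing_NormedModule R_AbsRing)) in Hx. subst x.
    intros eps.
    destruct (H eps) as [del Hd]. exists del. intros y Hy.
    change R in y. change (Rlt (Rabs (y - t)) del) in Hy.
    specialize (Hd (y - t)%R Hy).
    replace (t + (y - t))%R with y in Hd by ring.
    rewrite normCR.
    change (norm (minus y t)) with (Rabs (y - t)).
    eapply Rle_trans; [apply Req_le; f_equal | exact Hd].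
    destruct (f y) as [a1 a2], (f t) as [b1 b2], l as [l1 l2].
    unfold minus, plus, opp, scal. simpl.
    change (scal (minus y t) l1) with ((y-t) * l1)%R.
    change (scal (minus y t) l2) with ((y-t) * l2)%R.
    change (minus y t) with (y - t)%R.
    unfold prod_plus, prod_opp, prod_scal, Cminus, Cplus, Copp, Cmult, Cmod. simpl.
    unfold plus, opp, scal, mult; simpl. change mult with Rmult. f_equal. ring.
Qed.

Open Scope C_scope.

Lemma minus_CR (x y : C) : @minus C_R_NormedModule x y = x - y.
Proof.
  destruct x as [a b], y as [c d]. unfold minus, plus, opp. simpl.
  unfold prod_plus, prod_opp, Cminus, Cplus, Copp. simpl. reflexivity.
Qed.

Lemma scal_CR (r : R) (x : C) : @scal R_AbsRing C_R_NormedModule r x = RtoC r * x.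
Proof.
  destruct x as [a b]. unfold scal. simpl.
  unfold prod_scal, Cmult, RtoC. simpl. apply injective_projections; simpl;
  unfold scal; simpl; change mult with Rmult; ring.
Qed.

Lemma is_RInt_Cmult (f : R -> C) (a b : R) (l k : C) :
  @is_RInt C_R_NormedModule f a b l ->
  @is_RInt C_R_NormedModule (fun t => k * f t) a b (k * l).
Proof.
  intros H.
  pose proof (@is_RInt_fct_extend_fst R_NormedModule R_NormedModule f a b l H) as H1.
  pose proof (@is_RInt_fct_extend_snd R_NormedModule R_NormedModule f a b l H) as H2.
  destruct k as [k1 k2].
  apply (@is_RInt_fct_extend_pair R_NormedModule R_NormedModule).
  - simpl.
    pose proof (is_RInt_minus _ _ _ _ _ _ (is_RInt_scal _ _ _ k1 _ H1) (is_RInt_scal _ _ _ k2 _ H2)) as H3.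
    eapply is_RInt_ext; [|exact H3]. intros x _. simpl. reflexivity.
  - simpl.
    pose proof (is_RInt_plus _ _ _ _ _ _ (is_RInt_scal _ _ _ k1 _ H2) (is_RInt_scal _ _ _ k2 _ H1)) as H3.
    eapply is_RInt_ext; [|exact H3]. intros x _. simpl. reflexivity.
Qed.

Open Scope C_scope.

Lemma RtoC_plus' (a b : R) : RtoC (a + b) = RtoC a + RtoC b.
Proof. apply injective_projections; simpl; ring. Qed.

Lemma Cmod_RtoC (r : R) : Cmod (RtoC r) = Rabs r.
Proof. apply Cmod_R. Qed.

Lemma cont_path (F : C -> C) (a k : C) (t0 : R) :
  (forall eps : posreal, exists del : posreal, forall v,
     Cmod (v - RtoC t0 * a) < del -> Cmod (F v - F (RtoC t0 * a)) < eps) ->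
  @continuous R_UniformSpace C_R_NormedModule (fun t : R => k * F (RtoC t * a)) t0.
Proof.
  intros H. apply filterlim_locally. intros eps.
  assert (P : (0 < eps / (Cmod k + 1))%R).
  { apply Rdiv_lt_0_compat. apply cond_pos. pose proof (Cmod_ge_0 k). lra. }
  destruct (H (mkposreal _ P)) as [del Hd]. simpl in Hd.
  assert (P2 : (0 < del / (Cmod a + 1))%R).
  { apply Rdiv_lt_0_compat. apply cond_pos. pose proof (Cmod_ge_0 a). lra. }
  exists (mkposreal _ P2). intros t Ht. simpl in Ht.
  change (Rlt (Rabs (t - t0)) (del / (Cmod a + 1))) in Ht.
  apply norm_compat1. rewrite normCR, minus_CR.
  replace (k * F (RtoC t * a) - k * F (RtoC t0 * a)) with (k * (F (RtoC t * a) - F (RtoC t0 * a))) by ring.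
  rewrite Cmod_mult.
  assert (Hv : Cmod (RtoC t * a - RtoC t0 * a) < del).
  { replace (RtoC t * a - RtoC t0 * a) with (RtoC (t - t0) * a)
      by (unfold Rminus; rewrite RtoC_plus', RtoC_opp; ring).
    rewrite Cmod_mult, Cmod_RtoC. pose proof (Cmod_ge_0 a). pose proof (Rabs_pos (t - t0)).
    pose proof (cond_pos del).
    apply Rle_lt_trans with (Rabs (t - t0) * (Cmod a + 1))%R. nra.
    apply Rmult_lt_reg_r with (/ (Cmod a + 1))%R. apply Rinv_0_lt_compat. lra.
    rewrite Rmult_assoc, Rinv_r by lra. rewrite Rmult_1_r. exact Ht. }
  specialize (Hd _ Hv).
  pose proof (Cmod_ge_0 k). pose proof (cond_pos eps).
  apply Rle_lt_trans with ((Cmod k + 1) * Cmod (F (RtoC t * a)%C - F (RtoC t0 * a)%C))%R.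
  pose proof (Cmod_ge_0 (F (RtoC t * a)%C - F (RtoC t0 * a)%C)). nra.
  apply Rlt_le_trans with ((Cmod k + 1) * (eps / (Cmod k + 1)))%R.
  apply Rmult_lt_compat_l; lra. right. field. lra.
Qed.

Lemma Rchain (F : C -> C) (a F' : C) (t0 : R) :
  @is_derive C_AbsRing C_NormedModule F (RtoC t0 * a) F' ->
  @is_derive R_AbsRing C_R_NormedModule (fun t : R => F (RtoC t * a)) t0 (a * F').
Proof.
  intros H. apply Rderiv_of_eps. intros eps.
  assert (P : (0 < eps / (Cmod a + 1))%R).
  { apply Rdiv_lt_0_compat. apply cond_pos. pose proof (Cmod_ge_0 a). lra. }
  destruct (Cderiv_eps _ _ _ H (mkposreal _ P)) as [del Hd]. simpl in Hd.
  assert (P2 : (0 < del / (Cmod a + 1))%R).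
  { apply Rdiv_lt_0_compat. apply cond_pos. pose proof (Cmod_ge_0 a). lra. }
  exists (mkposreal _ P2). intros h Hh. simpl in Hh.
  assert (Hv : Cmod (RtoC h * a) < del).
  { rewrite Cmod_mult, Cmod_RtoC. pose proof (Cmod_ge_0 a). pose proof (Rabs_pos h).
    pose proof (cond_pos del).
    apply Rle_lt_trans with (Rabs h * (Cmod a + 1))%R. nra.
    apply Rmult_lt_reg_r with (/ (Cmod a + 1))%R. apply Rinv_0_lt_compat. lra.
    rewrite Rmult_assoc, Rinv_r by lra. rewrite Rmult_1_r. exact Hh. }
  specialize (Hd _ Hv).
  replace (RtoC (t0 + h) * a) with (RtoC t0 * a + RtoC h * a) by (rewrite RtoC_plus'; ring).
  replace (RtoC h * (a * F')) with (RtoC h * a * F') by ring.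
  eapply Rle_trans. exact Hd.
  rewrite Cmod_mult, Cmod_RtoC. pose proof (Cmod_ge_0 a). pose proof (Rabs_pos h).
  pose proof (cond_pos eps).
  replace (eps / (Cmod a + 1) * (Rabs h * Cmod a))%R with
    (eps * Rabs h * (Cmod a / (Cmod a + 1)))%R by (field; lra).
  rewrite <- (Rmult_1_r (eps * Rabs h)) at 2.
  apply Rmult_le_compat_l. apply Rmult_le_pos; lra.
  apply Rmult_le_reg_r with (Cmod a + 1)%R. lra.
  unfold Rdiv. rewrite Rmult_assoc, Rinv_l by lra. lra.
Qed.

Lemma Cderiv_unique (f : C -> C) (z l1 l2 : C) :
  @is_derive C_AbsRing C_NormedModule f z l1 ->
  @is_derive C_AbsRing C_NormedModule f z l2 -> l1 = l2.
Proof.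
  intros H1 H2.
  assert (forall eps : posreal, Rle (Cmod (l1 - l2)) (2 * eps)%R).
  { intros eps.
    destruct (Cderiv_eps _ _ _ H1 eps) as [d1 Hd1].
    destruct (Cderiv_eps _ _ _ H2 eps) as [d2 Hd2].
    set (h := (Rmin d1 d2 / 2)%R).
    assert (Hh : (0 < h)%R).
    { unfold h. apply Rdiv_lt_0_compat. apply Rmin_pos; apply cond_pos. lra. }
    assert (Hm1 : Cmod (RtoC h) < d1).
    { rewrite Cmod_RtoC, Rabs_pos_eq by lra. unfold h. pose proof (Rmin_l d1 d2).
      pose proof (Rmin_pos d1 d2 (cond_pos d1) (cond_pos d2)). lra. }
    assert (Hm2 : Cmod (RtoC h) < d2).
    { rewrite Cmod_RtoC, Rabs_pos_eq by lra. unfold h. pose proof (Rmin_r d1 d2).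
      pose proof (Rmin_pos d1 d2 (cond_pos d1) (cond_pos d2)). lra. }
    specialize (Hd1 _ Hm1). specialize (Hd2 _ Hm2).
    assert (Rle (Cmod (RtoC h * (l1 - l2))) (2 * eps * Cmod (RtoC h))%R).
    { replace (RtoC h * (l1 - l2)) with
        (- (f (z + RtoC h) - f z - RtoC h * l1) + (f (z + RtoC h) - f z - RtoC h * l2)) by ring.
      eapply Rle_trans. apply Cmod_triangle. rewrite Cmod_opp. lra. }
    rewrite Cmod_mult in H. rewrite Cmod_RtoC, Rabs_pos_eq in H by lra.
    apply Rmult_le_reg_l with h. lra. lra. }
  destruct (Ceq_dec (l1 - l2) 0) as [E|E].
  - replace l1 with (l1 - l2 + l2) by ring. rewrite E. ring.
  - exfalso. assert (Hp : (0 < Cmod (l1 - l2))%R).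
    { pose proof (Cmod_ge_0 (l1 - l2)). destruct H0; auto. symmetry in H0. apply Cmod_eq_0 in H0. tauto. }
    assert (Hq : (0 < Cmod (l1 - l2) / 4)%R) by lra.
    specialize (H (mkposreal _ Hq)). simpl in H. lra.
Qed.

Lemma Cderiv_of_quad (f : C -> C) (z l : C) (del M : R) :
  (0 < del)%R -> (0 <= M)%R ->
  (forall h, Cmod h < del -> Rle (Cmod (f (z + h) - f z - h * l)) (M * Cmod h ^ 2)%R) ->
  @is_derive C_AbsRing C_NormedModule f z l.
Proof.
  intros Hdel HM H. apply Cderiv_of_eps. intros eps.
  assert (P : (0 < Rmin del (eps / (M + 1)))%R).
  { apply Rmin_pos. lra. apply Rdiv_lt_0_compat. apply cond_pos. lra. }
  exists (mkposreal _ P). intros h Hh. simpl in Hh.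
  pose proof (Rmin_l del (eps / (M + 1))).
  pose proof (Rmin_r del (eps / (M + 1))).
  eapply Rle_trans. apply H. lra.
  pose proof (Cmod_ge_0 h).
  assert (M * Cmod h <= eps)%R.
  { apply Rle_trans with (M * (eps / (M + 1)))%R. apply Rmult_le_compat_l; lra.
    apply Rle_trans with ((M + 1) * (eps / (M + 1)))%R.
    apply Rmult_le_compat_r. apply Rlt_le, Rdiv_lt_0_compat. apply cond_pos. lra. lra.
    right. field. lra. }
  replace (M * Cmod h ^ 2)%R with ((M * Cmod h) * Cmod h)%R by ring.
  apply Rmult_le_compat_r; auto.
Qed.

Lemma Cexp_derive (w : C) : @is_derive C_AbsRing C_NormedModule Cexp w (Cexp w).
Proof.
  apply (Cderiv_of_quad _ _ _ 1 (Cmod (Cexp w) * (4 * exp 2))).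
  lra. apply Rmult_le_pos. apply Cmod_ge_0. pose proof (exp_pos 2). lra.
  intros h Hh.
  replace (Cexp (w + h) - Cexp w - h * Cexp w) with (Cexp w * (Cexp h - 1 - h))
    by (rewrite Cexp_add; ring).
  rewrite Cmod_mult.
  replace (Cmod (Cexp w) * (4 * exp 2) * Cmod h ^ 2)%R with (Cmod (Cexp w) * (4 * exp 2 * Cmod h ^ 2))%R by ring.
  apply Rmult_le_compat_l. apply Cmod_ge_0.
  apply Cexp_small. lra.
Qed.

Open Scope C_scope.

Lemma lip_cont (F : C -> C) (u : C) (del0 K : R) :
  (0 < del0)%R -> (0 <= K)%R ->
  (forall v, Cmod (v - u) < del0 -> Rle (Cmod (F v - F u)) (K * Cmod (v - u))%R) ->
  forall eps : posreal, exists del : posreal, forall v,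
     Cmod (v - u) < del -> Cmod (F v - F u) < eps.
Proof.
  intros Hd HK H eps.
  assert (P : (0 < Rmin del0 (eps / (K + 1)))%R).
  { apply Rmin_pos. lra. apply Rdiv_lt_0_compat. apply cond_pos. lra. }
  exists (mkposreal _ P). intros v Hv. simpl in Hv.
  pose proof (Rmin_l del0 (eps / (K + 1))). pose proof (Rmin_r del0 (eps / (K + 1))).
  eapply Rle_lt_trans. apply H. lra.
  pose proof (Cmod_ge_0 (v - u)). pose proof (cond_pos eps).
  apply Rle_lt_trans with ((K + 1) * Cmod (v - u))%R. nra.
  apply Rlt_le_trans with ((K + 1) * (eps / (K + 1)))%R.
  apply Rmult_lt_compat_l; lra. right; field; lra.
Qed.

Definition Qf (p' : C -> C) (u : C) : C :=
  match excluded_middle_informative (u = 0) with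
  | left _ => p' 0
  | right _ => (phi_nc u - 1) / u
  end.

Lemma Qf_0 (p' : C -> C) : Qf p' 0 = p' 0.
Proof. unfold Qf. destruct excluded_middle_informative as [_|n]. reflexivity. exfalso; apply n; reflexivity. Qed.

Lemma Qf_nz (p' : C -> C) (u : C) : u <> 0 -> Qf p' u = (phi_nc u - 1) / u.
Proof. intros H. unfold Qf. destruct excluded_middle_informative as [e|_]. exfalso; apply H; exact e. reflexivity. Qed.

Lemma Cmod_pos_nz (u : C) : u <> 0 -> (0 < Cmod u)%R.
Proof.
  intros H. pose proof (Cmod_ge_0 u). destruct H0; auto.
  symmetry in H0. apply Cmod_eq_0 in H0. tauto.
Qed.

Lemma Cmod_nz (u : C) : (0 < Cmod u)%R -> u <> 0.
Proof. intros H E. rewrite E, Cmod_0 in H. lra. Qed.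

Lemma Q_lip (p' : C -> C) (u : C) : TB phi_nc p' -> Cmod u < 1 ->
  exists del0 K, (0 < del0)%R /\ (0 <= K)%R /\
   forall v, Cmod (v - u) < del0 -> Rle (Cmod (Qf p' v - Qf p' u)) (K * Cmod (v - u))%R.
Proof.
  intros Hp Hu.
  destruct (TB_diff _ _ Hp) as (Kd & HKd & Hdiff).
  destruct Hp as (B0 & B1 & M & HM & HB & HT).
  destruct (Ceq_dec u 0) as [E|E].
  - subst u. exists (1 - Cmod 0)%R, M. rewrite Cmod_0. split. lra. split. auto.
    intros v Hv. replace (v - 0) with v in * by ring.
    rewrite Qf_0. destruct (Ceq_dec v 0) as [E|E].
    + subst v. rewrite Qf_0. replace (p' 0 - p' 0) with (RtoC 0) by ring. rewrite Cmod_0. lra.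
    + rewrite Qf_nz by auto.
      assert (UD0 : UD 0) by apply UD0.
      assert (UDv : UD v) by (unfold UD; lra).
      specialize (HT 0 v UD0 UDv). rewrite phi_0 in HT.
      replace ((phi_nc v - 1) / v - p' 0) with ((phi_nc v - 1 - (v - 0) * p' 0) / v) by (field; auto).
      rewrite Cmod_div by auto. replace (v - 0) with v in * by ring.
      pose proof (Cmod_pos_nz v E).
      apply Rmult_le_reg_r with (Cmod v). auto.
      unfold Rdiv. rewrite Rmult_assoc, Rinv_l by lra. rewrite Rmult_1_r.
      simpl in HT. nra.
  - pose proof (Cmod_pos_nz u E) as Hu0.
    set (K := ((Cmod u * Kd + Cmod (phi_nc u - 1)) / (Cmod u * (Cmod u / 2)))%R).
    exists (Rmin (Cmod u / 2) (1 - Cmod u)), K.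
    split. apply Rmin_pos; lra. split.
    { unfold K. apply Rmult_le_pos. pose proof (Cmod_ge_0 (phi_nc u - 1)). nra.
      left. apply Rinv_0_lt_compat. nra. }
    intros v Hv.
    pose proof (Rmin_l (Cmod u / 2) (1 - Cmod u)). pose proof (Rmin_r (Cmod u / 2) (1 - Cmod u)).
    assert (Hvu : (Cmod u / 2 <= Cmod v)%R).
    { pose proof (Cmod_triangle v (u - v)).
      replace (v + (u - v)) with u in H1 by ring. rewrite (Cmod_sub_sym u v) in H1. lra. }
    assert (Ev : v <> 0) by (apply Cmod_nz; lra).
    assert (UDu : UD u) by (unfold UD; lra).
    assert (UDv : UD v).
    { unfold UD. replace v with (u + (v - u)) by ring. eapply Rle_trans. apply Cmod_triangle. lra. }
    rewrite !Qf_nz by auto.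
    replace ((phi_nc v - 1) / v - (phi_nc u - 1) / u) with
      ((u * (phi_nc v - phi_nc u) - (v - u) * (phi_nc u - 1)) / (u * v)) by (field; auto).
    rewrite Cmod_div by (apply Cmult_neq_0; auto).
    rewrite Cmod_mult.
    assert (Num : Rle (Cmod (u * (phi_nc v - phi_nc u) - (v - u) * (phi_nc u - 1)))
                 ((Cmod u * Kd + Cmod (phi_nc u - 1)) * Cmod (v - u))%R).
    { eapply Rle_trans. apply Cmod_sub_le. rewrite !Cmod_mult.
      pose proof (Hdiff u v UDu UDv). pose proof (Cmod_ge_0 (phi_nc u - 1)).
      pose proof (Cmod_ge_0 (v - u)).
      assert (Cmod u * Cmod (phi_nc v - phi_nc u) <= Cmod u * (Kd * Cmod (v - u)))%R
        by (apply Rmult_le_compat_l; lra).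
      nra. }
    set (N := Cmod (u * (phi_nc v - phi_nc u) - (v - u) * (phi_nc u - 1))) in *.
    assert (0 <= N)%R by apply Cmod_ge_0.
    apply Rle_trans with (N / (Cmod u * (Cmod u / 2)))%R.
    { unfold Rdiv. apply Rmult_le_compat_l; auto. apply Rinv_le_contravar. nra.
      apply Rmult_le_compat_l; lra. }
    apply Rle_trans with (((Cmod u * Kd + Cmod (phi_nc u - 1)) * Cmod (v - u)) / (Cmod u * (Cmod u / 2)))%R.
    { unfold Rdiv. apply Rmult_le_compat_r; [left; apply Rinv_0_lt_compat; nra | exact Num]. }
    right. unfold K. field. lra.
Qed.

Lemma p'_lip (p' : C -> C) (u : C) : TB phi_nc p' -> Cmod u < 1 ->
  exists del0 K, (0 < del0)%R /\ (0 <= K)%R /\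
   forall v, Cmod (v - u) < del0 -> Rle (Cmod (p' v - p' u)) (K * Cmod (v - u))%R.
Proof.
  intros Hp Hu. destruct (TB_lip _ _ Hp) as (K & HK & HL).
  exists (1 - Cmod u)%R, K. split. lra. split. auto.
  intros v Hv. apply HL. unfold UD; lra.
  unfold UD. replace v with (u + (v - u)) by ring. eapply Rle_trans. apply Cmod_triangle. lra.
Qed.

Open Scope C_scope.

Definition Gf (p' : C -> C) (c : R) (z : C) : C :=
  RInt (V := C_R_CompleteNormedModule)
    (fun t => (RtoC c * z) * Qf p' (RtoC t * (RtoC c * z))) 0 1.

Definition Lf (p' : C -> C) (c : R) (z : C) : C :=
  RInt (V := C_R_CompleteNormedModule)
    (fun t => RtoC c * p' (RtoC t * (RtoC c * z))) 0 1.

Lemma path_small (c t : R) (z : C) : (0 <= c <= 1)%R -> (0 <= t <= 1)%R -> Cmod z < 1 ->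
  Cmod (RtoC t * (RtoC c * z)) < 1.
Proof.
  intros Hc Ht Hz. rewrite !Cmod_mult, !Cmod_RtoC, !Rabs_pos_eq by lra.
  pose proof (Cmod_ge_0 z). 
  apply Rle_lt_trans with (Cmod z); auto.
  assert (c * Cmod z <= Cmod z)%R by nra. nra.
Qed.

Lemma ex_G (p' : C -> C) (c : R) (z : C) : TB phi_nc p' -> (0 <= c <= 1)%R -> Cmod z < 1 ->
  ex_RInt (V := C_R_CompleteNormedModule)
    (fun t => (RtoC c * z) * Qf p' (RtoC t * (RtoC c * z))) 0 1.
Proof.
  intros Hp Hc Hz. apply ex_RInt_continuous. intros t Ht.
  rewrite Rmin_left, Rmax_right in Ht by lra.
  apply cont_path.
  destruct (Q_lip p' _ Hp (path_small c t z Hc Ht Hz)) as (d0 & K & Hd0 & HK & HL).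
  apply (lip_cont _ _ d0 K); auto.
Qed.

Lemma ex_L (p' : C -> C) (c : R) (z : C) : TB phi_nc p' -> (0 <= c <= 1)%R -> Cmod z < 1 ->
  ex_RInt (V := C_R_CompleteNormedModule)
    (fun t => RtoC c * p' (RtoC t * (RtoC c * z))) 0 1.
Proof.
  intros Hp Hc Hz. apply ex_RInt_continuous. intros t Ht.
  rewrite Rmin_left, Rmax_right in Ht by lra.
  apply cont_path.
  destruct (p'_lip p' _ Hp (path_small c t z Hc Ht Hz)) as (d0 & K & Hd0 & HK & HL).
  apply (lip_cont _ _ d0 K); auto.
Qed.

Open Scope C_scope.

Lemma Cmul_swap (a b d : C) : a * (b * d) = b * a * d.
Proof. ring. Qed.

Lemma L_eq (p' : C -> C) (c : R) (z : C) : TB phi_nc p' -> (0 <= c <= 1)%R -> Cmod z < 1 ->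
  z * Lf p' c z = phi_nc (RtoC c * z) - 1.
Proof.
  intros Hp Hc Hz.
  assert (H1 : @is_RInt C_R_NormedModule
     (fun t => (RtoC c * z) * p' (RtoC t * (RtoC c * z))) 0 1
     (minus (phi_nc (RtoC 1 * (RtoC c * z))) (phi_nc (RtoC 0 * (RtoC c * z))))).
  { apply (is_RInt_derive (V := C_R_CompleteNormedModule)
      (fun t => phi_nc (RtoC t * (RtoC c * z)))).
    - intros t Ht. rewrite Rmin_left, Rmax_right in Ht by lra.
      apply Rchain. apply TB_derive; auto. apply path_small; auto.
    - intros t Ht. rewrite Rmin_left, Rmax_right in Ht by lra.
      apply cont_path.
      destruct (p'_lip p' _ Hp (path_small c t z Hc Ht Hz)) as (d0 & K & Hd0 & HK & HL).
      apply (lip_cont _ _ d0 K); auto. }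
  assert (H2 : @is_RInt C_R_NormedModule
     (fun t => z * (RtoC c * p' (RtoC t * (RtoC c * z)))) 0 1 (z * Lf p' c z)).
  { apply is_RInt_Cmult. apply (RInt_correct (V := C_R_CompleteNormedModule)). apply ex_L; auto. }
  assert (H3 : @is_RInt C_R_NormedModule
     (fun t => (RtoC c * z) * p' (RtoC t * (RtoC c * z))) 0 1 (z * Lf p' c z)).
  { eapply is_RInt_ext; [|exact H2]. intros t _. apply Cmul_swap. }
  apply (is_RInt_unique (V := C_R_CompleteNormedModule)) in H1.
  apply (is_RInt_unique (V := C_R_CompleteNormedModule)) in H3.
  rewrite <- H3. rewrite H1.
  assert (E1 : RtoC 1 * (RtoC c * z) = RtoC c * z) by ring.
  assert (E0 : RtoC 0 * (RtoC c * z) = RtoC 0) by ring.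
  rewrite E1, E0, phi_0. apply minus_CR.
Qed.

Open Scope C_scope.

Lemma RtoC_neq0 (r : R) : r <> 0%R -> RtoC r <> 0.
Proof. intros H E. apply H. injection E. auto. Qed.

Lemma cQ_id (p' : C -> C) (c t : R) (w : C) : t <> 0%R -> c <> 0%R ->
  (RtoC c * w) * Qf p' (RtoC t * (RtoC c * w)) = (phi_nc (RtoC t * (RtoC c * w)) - 1) / RtoC t.
Proof.
  intros Ht Hc. pose proof (RtoC_neq0 t Ht). pose proof (RtoC_neq0 c Hc).
  destruct (Ceq_dec w 0) as [E|E].
  - subst w. replace (RtoC t * (RtoC c * 0)) with (RtoC 0) by ring. rewrite phi_0.
    field. auto.
  - assert (U : RtoC t * (RtoC c * w) <> 0) by (repeat apply Cmult_neq_0; auto).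
    rewrite Qf_nz by auto. field. auto.
Qed.

Lemma pt_bound (p' : C -> C) (M c t : R) (z h : C) :
  (0 <= M)%R ->
  (forall u v, UD u -> UD v ->
     Rle (Cmod (phi_nc v - phi_nc u - (v - u) * p' u)) (M * Cmod (v - u) ^ 2)%R) ->
  (0 < c <= 1)%R -> (0 <= t <= 1)%R -> Cmod z < 1 -> Cmod (z + h) < 1 ->
  Rle (Cmod ((RtoC c * (z + h)) * Qf p' (RtoC t * (RtoC c * (z + h)))
        - (RtoC c * z) * Qf p' (RtoC t * (RtoC c * z))
        - h * (RtoC c * p' (RtoC t * (RtoC c * z))))) (M * Cmod h ^ 2)%R.
Proof.
  intros HM HT Hc Ht Hz Hzh.
  destruct (Req_dec t 0) as [E|E].
  - subst t. 
    replace (RtoC 0 * (RtoC c * (z + h))) with (RtoC 0) by ring.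
    replace (RtoC 0 * (RtoC c * z)) with (RtoC 0) by ring.
    rewrite Qf_0.
    replace (RtoC c * (z + h) * p' 0 - RtoC c * z * p' 0 - h * (RtoC c * p' 0)) with (RtoC 0) by ring.
    rewrite Cmod_0. pose proof (Cmod_ge_0 h). simpl. nra.
  - rewrite !cQ_id by lra.
    assert (Tn : RtoC t <> 0) by (apply RtoC_neq0; lra).
    set (u := RtoC t * (RtoC c * z)).
    set (v := RtoC t * (RtoC c * (z + h))).
    replace ((phi_nc v - 1) / RtoC t - (phi_nc u - 1) / RtoC t - h * (RtoC c * p' u))
      with ((phi_nc v - phi_nc u - (v - u) * p' u) / RtoC t) by (unfold u, v; field; auto).
    rewrite Cmod_div by auto. rewrite Cmod_RtoC, Rabs_pos_eq by lra.
    assert (UDu : UD u) by (unfold UD, u; left; apply path_small; auto; lra).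
    assert (UDv : UD v) by (unfold UD, v; left; apply path_small; auto; lra).
    specialize (HT u v UDu UDv).
    replace (v - u) with (RtoC t * (RtoC c * h)) in * by (unfold u, v; ring).
    rewrite !Cmod_mult, !Cmod_RtoC, !Rabs_pos_eq in HT by lra.
    assert (Tp : (0 < t)%R) by lra.
    apply Rmult_le_reg_r with t. auto.
    unfold Rdiv. rewrite Rmult_assoc, Rinv_l by lra. rewrite Rmult_1_r.
    eapply Rle_trans. exact HT.
    pose proof (Cmod_ge_0 h).
    assert (t * (c * Cmod h) <= Cmod h)%R.
    { assert (t * c <= 1)%R by nra. 
      replace (t * (c * Cmod h))%R with ((t * c) * Cmod h)%R by ring. nra. }
    assert ((t * (c * Cmod h)) ^ 2 <= t * Cmod h ^ 2)%R.
    { replace ((t * (c * Cmod h)) ^ 2)%R with (t * (t * c * c) * Cmod h ^ 2)%R by ring.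
      assert (tc : (0 <= t * c <= 1)%R) by (split; nra).
      assert (tcc : (0 <= t * c * c <= 1)%R) by (split; nra).
      assert (0 <= Cmod h ^ 2)%R by (apply pow2_ge_0).
      rewrite Rmult_assoc. apply Rmult_le_compat_l. lra.
      rewrite <- (Rmult_1_l (Cmod h ^ 2)) at 2. apply Rmult_le_compat_r; lra. }
    replace (M * Cmod h ^ 2 * t)%R with (M * (t * Cmod h ^ 2))%R by ring.
    apply Rmult_le_compat_l; auto.
Qed.

Open Scope C_scope.

Lemma G_deriv (p' : C -> C) (c : R) (z : C) : TB phi_nc p' -> (0 < c <= 1)%R -> Cmod z < 1 ->
  @is_derive C_AbsRing C_NormedModule (Gf p' c) z (Lf p' c z).
Proof.
  intros Hp Hc Hz.
  pose proof Hp as (B0 & B1 & M & HM & HB & HT).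
  apply (Cderiv_of_quad _ _ _ (1 - Cmod z) M). lra. auto.
  intros h Hh.
  assert (Hzh : Cmod (z + h) < 1).
  { eapply Rle_lt_trans. apply Cmod_triangle. lra. }
  assert (Hc' : (0 <= c <= 1)%R) by lra.
  pose proof (RInt_correct (V := C_R_CompleteNormedModule) _ _ _ (ex_G p' c (z + h) Hp Hc' Hzh)) as I1.
  pose proof (RInt_correct (V := C_R_CompleteNormedModule) _ _ _ (ex_G p' c z Hp Hc' Hz)) as I2.
  pose proof (is_RInt_Cmult _ _ _ _ h (RInt_correct (V := C_R_CompleteNormedModule) _ _ _ (ex_L p' c z Hp Hc' Hz))) as I3.
  pose proof (is_RInt_minus _ _ _ _ _ _ (is_RInt_minus _ _ _ _ _ _ I1 I2) I3) as I4.
  pose proof (is_RInt_const (V := R_NormedModule) 0 1 (M * Cmod h ^ 2)%R) as I5.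
  match type of I4 with @is_RInt _ ?f _ _ ?l =>
    assert (Hpt : forall t, (0 <= t <= 1)%R -> Rle (norm (f t)) (M * Cmod h ^ 2)%R) end.
  { intros t Ht. cbv beta. rewrite !minus_CR, normCR.
    apply (pt_bound p' M c t z h HM HT); auto. }
  pose proof (norm_RInt_le _ _ 0 1 _ _ ltac:(lra) Hpt I4 I5) as N.
  rewrite normCR, !minus_CR in N.
  unfold Gf, Lf.
  eapply Rle_trans. exact N. right. change (scal (1 - 0) (M * Cmod h ^ 2))%R with ((1 - 0) * (M * Cmod h ^ 2))%R. ring.
Qed.

Open Scope C_scope.

Lemma is_derive_eq (f : C -> C) (z l l' : C) :
  @is_derive C_AbsRing C_NormedModule f z l -> l = l' ->
  @is_derive C_AbsRing C_NormedModule f z l'.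
Proof. intros H E; subst; auto. Qed.

Lemma deriv_conv (f : C -> C) (z l : C) :
  @is_derive C_AbsRing C_NormedModule f z l ->
  @is_derive C_AbsRing (AbsRing_NormedModule C_AbsRing) f z l.
Proof.
  intros H0. pose proof (Cderiv_eps _ _ _ H0) as H. split.
  - apply is_linear_scal_l.
  - intros x Hx. apply (@is_filter_lim_locally_unique C_AbsRing (AbsRing_NormedModule C_AbsRing)) in Hx. subst x.
    intros eps.
    destruct (H eps) as [del Hd]. exists del. intros y Hy.
    change (Rlt (Cmod (y - z)) del) in Hy.
    change (Rle (Cmod (f y - f z - (y - z) * l)) (eps * Cmod (y - z))).
    specialize (Hd (y - z) Hy). 
    rewrite Cplus_sub in Hd. exact Hd.
Qed.

Lemma deriv_conv_back (f : C -> C) (z l : C) :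
  @is_derive C_AbsRing (AbsRing_NormedModule C_AbsRing) f z l ->
  @is_derive C_AbsRing C_NormedModule f z l.
Proof.
  intros [_ H]. apply Cderiv_of_eps. intros eps.
  specialize (H z (fun P HP => HP) eps).
  destruct H as [del Hd]. exists del. intros h Hh.
  specialize (Hd (z + h)).
  assert (E : z + h - z = h) by ring.
  change (Rlt (Cmod (z + h - z)) del -> Rle (Cmod (f (z+h) - f z - (z + h - z) * l)) (eps * Cmod (z + h - z))) in Hd.
  rewrite E in Hd. apply Hd. exact Hh.
Qed.

Definition fext (p' : C -> C) (c : R) (z : C) : C := z * Cexp (Gf p' c z).

Lemma fext_deriv (p' : C -> C) (c : R) (z : C) : TB phi_nc p' -> (0 < c <= 1)%R -> Cmod z < 1 ->
  @is_derive C_AbsRing C_NormedModule (fext p' c) z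
    (Cexp (Gf p' c z) + z * (Lf p' c z * Cexp (Gf p' c z))).
Proof.
  intros Hp Hc Hz.
  pose proof (is_derive_comp Cexp (Gf p' c) z _ _ (Cexp_derive (Gf p' c z)) (deriv_conv _ _ _ (G_deriv p' c z Hp Hc Hz))) as H1.
  pose proof (is_derive_mult (K := C_AbsRing) (fun x => x) (fun x => Cexp (Gf p' c x)) z _ _ (is_derive_id z) (deriv_conv _ _ _ H1)) as H2.
  specialize (H2 ltac:(intros; apply Cmult_comm)). apply deriv_conv_back in H2.
  unfold fext. eapply is_derive_eq. apply H2.
  change (one * Cexp (Gf p' c z) + z * (Lf p' c z * Cexp (Gf p' c z)) =
          Cexp (Gf p' c z) + z * (Lf p' c z * Cexp (Gf p' c z))).
  change one with (RtoC 1). ring.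
Qed.

Lemma Cderiv_val (f : C -> C) (z l : C) :
  @is_derive C_AbsRing C_NormedModule f z l -> Cderiv f z = l.
Proof.
  intros H. unfold Cderiv.
  pose proof (epsilon_spec (inhabits (RtoC 0)) (fun d => @is_derive C_AbsRing C_NormedModule f z d)
     (ex_intro _ l H)) as H2.
  eapply Cderiv_unique; eauto.
Qed.

Lemma G_0 (p' : C -> C) (c : R) : Gf p' c 0 = 0.
Proof.
  unfold Gf.
  assert (H0 : @is_RInt C_R_NormedModule (fun _ => RtoC 0) 0 1 (RtoC 0)).
  { pose proof (is_RInt_const (V := C_R_NormedModule) 0 1 (RtoC 0)) as H.
    rewrite scal_CR in H. replace (RtoC (1 - 0) * RtoC 0) with (RtoC 0) in H by ring. exact H. }
  apply (is_RInt_unique (V := C_R_CompleteNormedModule)).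
  eapply is_RInt_ext; [| exact H0].
  intros x _. cbv beta. symmetry.
  replace (RtoC c * 0) with (RtoC 0) by ring. apply Cmult_0_l.
Qed.

Open Scope C_scope.

Lemma part2 (alpha : R) : (0 < alpha < 1)%R ->
  exists f : C -> C, S_nc f /\ ~ S_star_alpha alpha f.
Proof.
  intros Ha. destruct TB_phi as [p' Hp].
  set (c := (1 - alpha / 4)%R).
  assert (Hc : (0 < c <= 1)%R) by (unfold c; lra).
  assert (Hc1 : (c < 1)%R) by (unfold c; lra).
  set (D := fun z => Cexp (Gf p' c z) + z * (Lf p' c z * Cexp (Gf p' c z))).
  assert (Hd : forall z, Cmod z < 1 -> @is_derive C_AbsRing C_NormedModule (fext p' c) z (D z)).
  { intros z Hz. apply fext_deriv; auto. }
  assert (Hzf : forall z, inD z -> zfpf (fext p' c) z = phi_nc (RtoC c * z)).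
  { intros z Hz. unfold zfpf. destruct excluded_middle_informative as [E|E].
    - subst z. replace (RtoC c * 0) with (RtoC 0) by ring. rewrite phi_0. reflexivity.
    - rewrite (Cderiv_val _ _ _ (Hd z Hz)). unfold D, fext.
      pose proof (Cexp_neq0 (Gf p' c z)).
      replace (z * (Cexp (Gf p' c z) + z * (Lf p' c z * Cexp (Gf p' c z))) / (z * Cexp (Gf p' c z)))
        with (1 + z * Lf p' c z) by (field; split; auto).
      rewrite L_eq by (auto; lra). ring. }
  exists (fext p' c). split.
  - split; [|split].
    + split; [|split].
      * intros z Hz. exists (D z). apply Hd. exact Hz.
      * unfold fext. ring.
      * eapply is_derive_eq. apply Hd. rewrite Cmod_0. lra.
        unfold D. rewrite G_0, Cexp_0. ring.
    + intros z _ Hz0. unfold fext. apply Cmult_neq_0; auto. apply Cexp_neq0.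
    + exists (fun z => RtoC c * z). split; [|split; [|split]].
      * intros z _. exists (RtoC c). apply (Cderiv_of_quad _ _ _ 1 0). lra. lra.
        intros h _. replace (RtoC c * (z + h) - RtoC c * z - h * RtoC c) with (RtoC 0) by ring.
        rewrite Cmod_0. pose proof (Cmod_ge_0 h). simpl. nra.
      * intros z Hz. unfold inD in *. rewrite Cmod_mult, Cmod_RtoC, Rabs_pos_eq by lra.
        pose proof (Cmod_ge_0 z). nra.
      * ring.
      * exact Hzf.
  - intros [_ [_ H]].
    assert (Hin : inD (RtoC (- c))).
    { unfold inD. rewrite Cmod_RtoC, Rabs_Ropp, Rabs_pos_eq; lra. }
    specialize (H _ Hin). rewrite Hzf in H by auto.
    assert (E : RtoC c * RtoC (- c) = ((c * - c)%R, 0%R)).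
    { apply injective_projections; simpl; ring. }
    rewrite E in H. set (x := (c * - c)%R) in *.
    assert (Hx : (Rabs x <= 1)%R).
    { unfold x. rewrite Rabs_mult, Rabs_Ropp, Rabs_pos_eq by lra. nra. }
    pose proof (cos_ge_cos1 x Hx). pose proof cos1_ge.
    rewrite Re_phi in H by lra.
    replace (cosh 0) with 1%R in H by (unfold cosh; rewrite Ropp_0, exp_0; field).
    replace (sinh 0) with 0%R in H by (unfold sinh; rewrite Ropp_0, exp_0; field).
    replace (((1 + x) * (cos x * 1) - 0 * (sin x * 0)) / ((cos x * 1) ^ 2 + (sin x * 0) ^ 2))%R
      with ((1 + x) / cos x)%R in H by (field; lra).
    assert (H1x : (0 <= 1 + x <= alpha / 2)%R) by (unfold x, c; split; nra).
    assert ((1 + x) / cos x <= alpha)%R.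
    { unfold Rdiv. apply Rle_trans with ((alpha / 2) * / (1/2))%R.
      apply Rmult_le_compat. lra. left; apply Rinv_0_lt_compat; lra. lra.
      apply Rinv_le_contravar; lra. right; field. }
    lra.
Qed.

Theorem mainTheorem8 :
  (forall f : C -> C, S_nc f -> S_star f) /\
  (forall alpha : R, (0 < alpha < 1)%R ->
     exists f : C -> C, S_nc f /\ ~ S_star_alpha alpha f) /\
  (forall beta : R, (2 / cos 1 <= beta)%R ->
     forall f : C -> C, S_nc f -> mu_beta beta f).
Proof.
  split; [|split].
  - intros f [HA [HN HS]]. split; [auto | split; [auto |]].
    intros z Hz. destruct HS as [w [Hw [HwD [Hw0 Heq]]]].
    rewrite Heq by auto. apply Re_phi_pos. apply HwD; auto.
  - exact part2.
  - intros beta Hb f [HA [HN HS]]. split; [auto | split; [auto |]].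
    intros z Hz. destruct HS as [w [Hw [HwD [Hw0 Heq]]]].
    rewrite Heq by auto. pose proof (Re_phi_lt (w z) (HwD z Hz)). lra.
Qed.
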